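(* Let $n\ge m\ge 1$ and consider a Lagrangian $$L=L_0(\dot q^I,q^I)+\lambda^a C_a(\dot q^I,q^I),\qquad I=1,\dots,n,\quad a=1,\dots,m,$$ with dynamical variables $q^I(t)$, Lagrange multipliers $\lambda^a(t)$ (whose time derivatives do not appear in $L$), and constraints $C_a=0$ (summation over repeated indices). Write $L_{IJ}=\partial^2 L/\partial\dot q^I\partial\dot q^J$, $L^{IJ}$ for its inverse, and $C_{aI}=\partial C_a/\partial \dot q^I$. Assume: 1. (Nondegeneracy) $\det(L_{IJ})\neq 0$ on the constraint surface $C_a=0$. Then the equations $p_I=\partial L/\partial\dot q^I$ can be solved (locally) for $\dot q^I=\dot q^I(q^J,p_J,\lambda^b)$. 2. (The constraints do not reduce the phase space dimension of $q^I$) $\det(M_{ab})\neq 0$ on the constraint surface, where $M_{ab}=C_{aI}L^{IJ}C_{bJ}$. Then the constraints $C_a(\dot q^I(q,p,\lambda),q^I)=0$ can be solved (locally) for $\lambda^a=F^a(q^I,p_I)$. 3. Either (a) there is no point satisfying $C_a=0$ for all $a$ together with $\dot q^I=0$ and $\partial L/\partial q^I=0$ for all $I$; or (b) at every point satisfying $C_a=0$, $\dot q^I=0$ and $\partial L/\partial q^I=0$ (for all $a,I$), the $m\times n$ matrix $\left.\partial C_a/\partial q^I\right|_{\lambda=F}$ is not the zero matrix (i.e. at least one constraint depends on $q^I$ there). Then the on-shell Hamiltonian $$H_{\text{on-shell}}(q^I,p_I)=\dot q^I_{\lambda=F}\,p_I-L_0(\dot q^I_{\lambda=F},q^I),\qquad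 \dot q^I_{\lambda=F}=\dot q^I(q^J,p_J,\lambda^b)\big|_{\lambda=F},$$ regarded as a function of the independent phase-space variables $(q^I,p_I)$, has neither a local minimum nor a local maximum (in the interior of its domain).
   Context: This is a statement in finite-dimensional Lagrangian/Hamiltonian mechanics. $p_I=\partial L/\partial\dot q^I$ are the canonical momenta conjugate to $q^I$; the momenta conjugate to $\lambda^a$ vanish identically (primary constraints), and requiring their preservation in time yields the secondary constraints $C_a\approx 0$, which under condition 2 fix $\lambda^a=F^a(q,p)$, leaving all $2n$ variables $(q^I,p_I)$ unconstrained. The on-shell Hamiltonian is the canonical Hamiltonian $\dot q^I p_I-L$ restricted to this constraint surface (where the term $\lambda^aC_a$ vanishes). A local minimum/maximum means a local extremum of $H_{\text{on-shell}}$ as a function of $(q^I,p_I)$; points on the boundary of the domain of $(q^I,p_I)$ are not considered. *)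

(* Defs.v *)
From HB Require Import structures.
From mathcomp Require Import all_boot all_order all_algebra.
From mathcomp Require Import all_classical all_reals all_analysis.
Set Implicit Arguments. Unset Strict Implicit. Unset Printing Implicit Defensive.
Import Order.TTheory GRing.Theory Num.Theory.
Import numFieldNormedType.Exports.
Local Open Scope classical_set_scope.
Local Open Scope ring_scope.

Section Mech.
Variable R : realType.

Definition ebasis (n : nat) (I : 'I_n) : 'rV[R]_n := delta_mx 0 I.

Definition C1_on (V : normedModType R) (O : set V) (f : V -> R) : Prop :=
  (forall z, O z -> differentiable f z) /\
  (forall v z, O z -> {for z, continuous (fun w => 'D_v f w)}).

Definition C2_on (V : normedModType R) (O : set V) (f : V -> R) : Prop :=
  C1_on O f /\ (forall v, C1_on O (fun w => 'D_v f w)).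

(* A Lagrangian L0(qdot, q) and constraints C_a(qdot, q) are functions
   'rV_n -> 'rV_n -> R, first argument qdot, second argument q. *)

Definition dqdot (n : nat) (f : 'rV[R]_n -> 'rV[R]_n -> R) (I : 'I_n)
  (qd q : 'rV[R]_n) : R := 'D_(ebasis I) (fun y => f y q) qd.

Definition dq (n : nat) (f : 'rV[R]_n -> 'rV[R]_n -> R) (I : 'I_n)
  (qd q : 'rV[R]_n) : R := 'D_(ebasis I) (fun y => f qd y) q.

Definition Lfull (n m : nat) (L0 : 'rV[R]_n -> 'rV[R]_n -> R)
  (C : 'I_m -> 'rV[R]_n -> 'rV[R]_n -> R) (lam : 'rV[R]_m)
  (qd q : 'rV[R]_n) : R :=
  L0 qd q + \sum_(a < m) lam 0 a * C a qd q.

Definition Lhess (n m : nat) L0 C (lam : 'rV[R]_m) (qd q : 'rV[R]_n)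
  : 'M[R]_n :=
  \matrix_(I < n, J < n)
     dqdot (fun y z => dqdot (@Lfull n m L0 C lam) J y z) I qd q.

Definition Cqdot (n m : nat) (C : 'I_m -> 'rV[R]_n -> 'rV[R]_n -> R)
  (qd q : 'rV[R]_n) : 'M[R]_(m, n) :=
  \matrix_(a < m, I < n) dqdot (C a) I qd q.

Definition Mmat (n m : nat) L0 C (lam : 'rV[R]_m) (qd q : 'rV[R]_n)
  : 'M[R]_m :=
  Cqdot C qd q *m invmx (@Lhess n m L0 C lam qd q) *m (Cqdot C qd q)^T.

(* On-shell Hamiltonian H(q,p) = qdot^I p_I - L0(qdot, q), with qdot = V(q,p) *)
Definition Honshell (n : nat) (L0 : 'rV[R]_n -> 'rV[R]_n -> R)
  (V : 'rV[R]_n * 'rV[R]_n -> 'rV[R]_n) (x : 'rV[R]_n * 'rV[R]_n) : R :=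
  \sum_(I < n) V x 0 I * x.2 0 I - L0 (V x) x.1.

Definition is_local_min (T : topologicalType) (f : T -> R) (x0 : T) : Prop :=
  \forall x \near x0, f x0 <= f x.
Definition is_local_max (T : topologicalType) (f : T -> R) (x0 : T) : Prop :=
  \forall x \near x0, f x <= f x0.

End Mech.

(* Main.v *)
Require Import Defs.
From HB Require Import structures.
From mathcomp Require Import all_boot all_order all_algebra.
From mathcomp Require Import all_classical all_reals all_analysis.
From mathcomp Require Import ring lra.
Import Order.TTheory GRing.Theory Num.Theory.
Import numFieldNormedType.Exports.
Local Open Scope classical_set_scope.
Local Open Scope ring_scope.
Set Implicit Arguments. Unset Strict Implicit. Unset Printing Implicit Defensive.

Section H.
Variable R : realType.
Lemma diff_bound (V W : normedModType R) (f : V -> W) x :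
  differentiable f x -> forall e : R, 0 < e -> exists2 d : R, 0 < d &
  forall h, `|h| < d -> `|f (x + h) - f x - 'd f x h| <= e * `|h|.
Proof.
move=> df e e0.
have := diff_locally df; move/eqaddoP => /(_ e e0) /nbhs_norm0P [d d0 Hd].
exists d => // h /Hd /=.
move=> H; apply: le_trans H; rewrite le_eqVlt; apply/orP; left; apply/eqP; congr (`|_|). by rewrite /= opprD addrA (addrC x).
Qed.
Lemma partial1 (U : normedModType R) (f : U * U -> R) (qd q v : U) :
  differentiable f (qd, q) ->
  'D_v (fun y => f (y, q)) qd = 'd f (qd, q) (v, 0).
Proof.
move=> df.
have dp : differentiable (fun y : U => (y, q)) qd.
  by apply: differentiable_pair.
rewrite (_ : (fun y => f (y, q)) = f \o (fun y => (y, q))) //.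
rewrite deriveE; last exact: differentiable_comp.
rewrite diff_comp // diff_pair //= diff_cst.
by rewrite diff_val.
Qed.

Lemma partial2 (U : normedModType R) (f : U * U -> R) (qd q v : U) :
  differentiable f (qd, q) ->
  'D_v (fun y => f (qd, y)) q = 'd f (qd, q) (0, v).
Proof.
move=> df.
have dp : differentiable (fun y : U => (qd, y)) q.
  by apply: differentiable_pair.
rewrite (_ : (fun y => f (qd, y)) = f \o (fun y => (qd, y))) //.
rewrite deriveE; last exact: differentiable_comp.
by rewrite diff_comp // diff_pair //= diff_cst diff_val.
Qed.

Lemma lin_decomp1 k (l : {linear ('rV[R]_k * 'rV[R]_k)%type -> R}) (d : 'rV[R]_k) :
  l (d, 0) = \sum_(J < k) d 0 J * l (ebasis R J, 0).
Proof.
pose g := fun y : 'rV[R]_k => l (y, 0).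
have gD : {morph g : a b / a + b}.
  move=> a b; rewrite /g -linearD; congr (l _).
  have -> : (a, 0) + (b, 0) = (a + b, 0 + 0) :> ('rV[R]_k * 'rV[R]_k) by []. by rewrite addr0.
have g0 : g 0 = 0 by rewrite /g -(linear0 l).
rewrite -[LHS]/(g d) {1}(row_sum_delta d) (big_morph g gD g0).
apply: eq_bigr => J _; rewrite /g /ebasis -linearZ /=; congr (l _).
have -> : d 0 J *: (delta_mx 0 J, 0) = (d 0 J *: delta_mx 0 J, d 0 J *: 0) :> ('rV[R]_k * 'rV[R]_k) by []. by rewrite scaler0.
Qed.

Lemma fst_lin (U W : normedModType R) : linear (fst : U * W -> U).
Proof. by move=> k a b. Qed.
Lemma is_diff_fst (U W : normedModType R) (x : U * W) : is_diff x fst fst.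
Proof.
pose M := GRing.isLinear.Build _ _ _ _ _ (@fst_lin U W).
pose fL : {linear (U * W)%type -> U} := HB.pack (fst : U * W -> U) M.
have fc : continuous fL by move=> y; exact: cvg_fst.
apply: DiffDef; first exact: linear_differentiable.
by rewrite (diff_lin _ fc).
Qed.

Lemma dval (U W : normedModType R) (f : U -> W) a v df :
  is_derive a v f df -> 'D_v f a = df.
Proof. by case. Qed.

Lemma lin2 (U : normedModType R) (l : {linear U -> R}) (t s : R) (u w : U) :
  l (t *: u + s *: w) = t * l u + s * l w.
Proof. by rewrite linearD !linearZ. Qed.

Lemma lin_is_derive (U W : normedModType R) (f : U -> W) (fl : linear f)
  (fc : continuous f) y h : is_derive y h f (f h).
Proof.
pose M := GRing.isLinear.Build _ _ _ _ _ fl.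
pose fL : {linear U -> W} := HB.pack f M.
have fc' : continuous fL by [].
have dL : differentiable fL y by exact: linear_differentiable.
apply: DeriveDef; first exact: diff_derivable.
by rewrite deriveE // (diff_lin _ fc').
Qed.

Lemma open_ball (U : normedModType R) (A : set U) y : open A -> A y ->
  exists2 d : R, 0 < d & forall z, `|z - y| < d -> A z.
Proof.
move=> oA Ay; have : nbhs y A by rewrite nbhsE; exists A. move/nbhs_normP => [d d0 Hd].
exists d => // z zd; apply: Hd => /=; by rewrite distrC.
Qed.

Lemma near_line (U : normedModType R) (Q : U -> Prop) x h t0 (d : R) :
  0 < d -> (forall z, `|z - (x + t0 *: h)| < d -> Q z) ->
  \forall t \near t0, Q (x + t *: h).
Proof.
move=> d0 Hd; apply/nbhs_normP; exists (d / (`|h| + 1)) => /=.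
  by rewrite divr_gt0 // ltr_wpDl.
move=> t; rewrite /ball_ /= => tt0; apply: Hd.
rewrite opprD addrACA subrr add0r -scalerBl normrZ.
have h1 : 0 < `|h| + 1 by rewrite ltr_wpDl.
apply: (@le_lt_trans _ _ (`|t - t0| * (`|h| + 1))).
  by apply: ler_wpM2l => //; rewrite lerDl.
by rewrite -ltr_pdivlMr // distrC.
Qed.

Lemma line_derive (U : normedModType R) (f : U -> R) x h t0 :
  derivable f (x + t0 *: h) h ->
  is_derive t0 1 (fun t => f (x + t *: h)) ('D_h f (x + t0 *: h)).
Proof.
have E : (fun s : R => s^-1 *: ((fun t => f (x + t *: h)) (s *: 1 + t0)
            - (fun t => f (x + t *: h)) t0)) =
         (fun s : R => s^-1 *: (f (s *: h + (x + t0 *: h)) - f (x + t0 *: h))).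
  apply/funext => s /=; congr (_ *: (f _ - _)).
  by rewrite [s *: 1]mulr1 scalerDl addrCA.
move=> dh; apply: DeriveDef; by rewrite /derivable /derive E.
Qed.
End H.

Section Main.
Variables (R : realType) (n m : nat).
Variables (L0 : 'rV[R]_n -> 'rV[R]_n -> R)
  (C : 'I_m -> 'rV[R]_n -> 'rV[R]_n -> R)
  (Omega : set ('rV[R]_n * 'rV[R]_n))
  (U : set ('rV[R]_n * 'rV[R]_n))
  (V : 'rV[R]_n * 'rV[R]_n -> 'rV[R]_n)
  (F : 'rV[R]_n * 'rV[R]_n -> 'rV[R]_m).
Hypotheses (HO : open Omega)
  (HL : C2_on Omega (fun z => L0 z.1 z.2))
  (HC : forall a, C2_on Omega (fun z => C a z.1 z.2))
  (HU : open U)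
  (HV : forall x, U x -> differentiable V x)
  (HF : forall x, U x -> differentiable F x)
  (HVO : forall x, U x -> Omega (V x, x.1))
  (Hp : forall x, U x -> forall I : 'I_n,
      x.2 0 I = dqdot (Lfull L0 C (F x)) I (V x) x.1)
  (Hc : forall x, U x -> forall a, C a (V x) x.1 = 0).

Local Notation P := ('rV[R]_n * 'rV[R]_n)%type.

Definition L0t (z : P) : R := L0 z.1 z.2.
Definition Ct a (z : P) : R := C a z.1 z.2.
Definition LL (lam : 'rV[R]_m) (z : P) : R := Lfull L0 C lam z.1 z.2.
Definition gam (x : P) : P := (V x, x.1).
Definition dot (u v : 'rV[R]_n) : R := \sum_(I < n) u 0 I * v 0 I.

Lemma dL0t z : Omega z -> differentiable L0t z.
Proof. by move=> Oz; exact: HL.1.1. Qed.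

Lemma dCt a z : Omega z -> differentiable (Ct a) z.
Proof. by move=> Oz; exact: (HC a).1.1. Qed.

Lemma LLE lam : LL lam = L0t + \sum_(a < m) (fun z => lam 0 a * Ct a z).
Proof. by apply/funext => z; rewrite /LL /Lfull fct_sumE. Qed.

Lemma dLL lam z : Omega z -> differentiable (LL lam) z.
Proof.
move=> Oz; rewrite LLE; apply: differentiableD; first exact: dL0t.
apply: differentiable_sum => a.
have -> : (fun z => lam 0 a * Ct a z) = cst (lam 0 a) * Ct a by [].
by apply: differentiableM => //; exact: dCt.
Qed.

Lemma dLLE lam z v : Omega z ->
  'd (LL lam) z v = 'D_v L0t z + \sum_(a < m) lam 0 a * 'D_v (Ct a) z.
Proof.
move=> Oz; rewrite -deriveE; last exact: dLL.
rewrite LLE deriveD; last 2 first.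
- exact/diff_derivable/dL0t.
- apply: derivable_sum => a; apply: diff_derivable.
  have -> : (fun z => lam 0 a * Ct a z) = cst (lam 0 a) * Ct a by [].
  by apply: differentiableM => //; exact: dCt.
congr (_ + _); rewrite derive_sum; last first.
  move=> a; apply: diff_derivable.
  have -> : (fun z => lam 0 a * Ct a z) = cst (lam 0 a) * Ct a by [].
  by apply: differentiableM => //; exact: dCt.
apply: eq_bigr => a _.
have -> : (fun z => lam 0 a * Ct a z) = lam 0 a \*o Ct a by [].
by rewrite deriveMl //; apply/diff_derivable/dCt.
Qed.

Lemma dgam x : U x -> differentiable gam x /\
  forall h, 'd gam x h = ('d V x h, h.1).
Proof.
move=> Ux; have dV := HV Ux.
have dfst : differentiable (fst : P -> 'rV[R]_n) x by have [] := is_diff_fst x.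
split; first exact: differentiable_pair.
move=> h; rewrite /gam diff_pair //.
congr pair; case: (is_diff_fst x) => _ E; exact: (congr1 (fun g => g h) E).
Qed.


Lemma pRel x d : U x -> 'd (LL (F x)) (gam x) (d, 0) = dot d x.2.
Proof.
move=> Ux; rewrite (lin_decomp1 ('d (LL (F x)) (gam x)) d) /dot.
apply: eq_bigr => J _; rewrite Hp //; congr (_ * _).
rewrite /gam -partial1 //; exact: (dLL (F x) (HVO Ux)).
Qed.

Lemma snd_coord_lin I : linear (fun z : P => z.2 0 I).
Proof. by move=> k a b /=; rewrite !mxE. Qed.

Lemma snd_coord_cont I : continuous (fun z : P => z.2 0 I).
Proof.
move=> z; apply: (@continuous_comp _ _ _ snd (fun M : 'rV[R]_n => M 0 I)).
  exact: cvg_snd.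
exact: coord_continuous.
Qed.

Lemma snd_coord_diff I z : differentiable (fun z : P => z.2 0 I) z.
Proof.
pose M := GRing.isLinear.Build _ _ _ _ _ (snd_coord_lin I).
pose fL : {linear P -> R} := HB.pack (fun z : P => z.2 0 I) M.
have fc : continuous fL by exact: snd_coord_cont.
have : differentiable fL z by exact: linear_differentiable.
by [].
Qed.

Lemma Vcoord_diff I z : U z -> differentiable (fun z => V z 0 I) z.
Proof.
move=> Uz; apply: (@differentiable_comp _ _ _ _ V (fun M : 'rV[R]_n => M 0 I)).
  exact: HV.
exact: differentiable_coord.
Qed.

Lemma dotpartE : (fun z : P => dot (V z) z.2) =
  \sum_(I < n) ((fun z => V z 0 I) * (fun z : P => z.2 0 I)).
Proof. by rewrite fct_sumE; apply/funext => z. Qed.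

Lemma Hderiv x h t0 : U (x + t0 *: h) ->
  is_derive t0 1 (fun t => Honshell L0 V (x + t *: h))
    (dot (V (x + t0 *: h)) h.2
     - 'd (LL (F (x + t0 *: h))) (gam (x + t0 *: h)) (0, h.1)).
Proof.
set y := x + t0 *: h => Uy.
set lam := F y.
pose Phi := fun z : P => dot (V z) z.2 - LL lam (gam z).
have [d d0 Hd] := open_ball HU Uy.
have nearE : \forall t \near t0, Phi (x + t *: h) = Honshell L0 V (x + t *: h).
  have NL := @near_line R _ (fun z : P => Phi z = Honshell L0 V z) x h t0 d d0.
  apply: NL => z /Hd Uz.
  rewrite /Phi /Honshell /LL /Lfull /gam /= /dot.
  by rewrite [X in L0 _ _ + X]big1 ?addr0 // => a _; rewrite Hc // mulr0.
apply: (near_eq_is_derive nearE).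
have [dg dgE] := dgam Uy.
have dLLy := dLL lam (HVO Uy).
have dcomp : differentiable (LL lam \o gam) y by exact: differentiable_comp.
have ddot : differentiable (fun z : P => dot (V z) z.2) y.
  rewrite dotpartE; apply: differentiable_sum => I; apply: differentiableM.
    exact: Vcoord_diff.
  exact: snd_coord_diff.
have dPhi : differentiable Phi y by exact: differentiableB.
have dPh : derivable Phi y h by exact: diff_derivable.
have H := @line_derive R _ Phi x h t0 dPh.
apply: (is_derive_eq H); rewrite -/y.
have dVy := HV Uy.
have E1 : 'D_h (fun z : P => dot (V z) z.2) y =
    \sum_(I < n) (V y 0 I * h.2 0 I + y.2 0 I * ('D_h V y) 0 I).
  have dI : forall I, differentiable
      ((fun z => V z 0 I) * (fun z : P => z.2 0 I)) y.
    by move=> I; apply: differentiableM; [exact: Vcoord_diff|exact: snd_coord_diff].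
  rewrite dotpartE derive_sum; last by move=> I; exact/diff_derivable/dI.
  apply: eq_bigr => I _; rewrite deriveM; last 2 first.
  - exact/diff_derivable/Vcoord_diff.
  - exact/diff_derivable/snd_coord_diff.
  rewrite (dval (lin_is_derive (@snd_coord_lin I) (@snd_coord_cont I) y h)).
  by congr (_ + _); rewrite (derive_mx (@diff_derivable R _ _ V y h dVy)) !mxE.
have E2 : 'D_h (fun z => LL lam (gam z)) y = 'd (LL lam) (gam y) ('D_h V y, h.1).
  rewrite deriveE; last exact: dcomp.
  have DV : 'D_h V y = 'd V y h by exact: deriveE.
  have DC := diff_comp dg dLLy.
  rewrite DV -dgE; exact: (congr1 (fun f => f h) DC).
have E : 'D_h Phi y = 'D_h (fun z : P => dot (V z) z.2) y
    - 'D_h (fun z => LL lam (gam z)) y.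
  rewrite /Phi deriveB //; exact: diff_derivable.
rewrite E E1 E2.
have PR := @pRel y ('D_h V y) Uy.
have LD : 'd (LL lam) (gam y) ('D_h V y, h.1) =
    dot ('D_h V y) y.2 + 'd (LL lam) (gam y) (0, h.1).
  rewrite -PR -linearD; congr ('d _ _ _).
  have -> : ('D_h V y, 0) + (0, h.1) = ('D_h V y + 0, 0 + h.1) :> P by [].
  by rewrite addr0 add0r.
rewrite LD /dot big_split /=.
have -> : \sum_(I < n) y.2 0 I * ('D_h V y) 0 I =
          \sum_(I < n) ('D_h V y) 0 I * y.2 0 I.
  by apply: eq_bigr => I _; rewrite mulrC.
ring.
Qed.


Lemma near_U x : U x -> \forall z \near x, U z.
Proof. move=> Ux; have NU : nbhs x U by rewrite nbhsE; exists U. by apply: filterS NU. Qed.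

Lemma constr_deriv x a h : U x ->
  \sum_(J < n) ('D_h V x) 0 J * dqdot (C a) J (V x) x.1
  + 'd (Ct a) (gam x) (0, h.1) = 0.
Proof.
move=> Ux; have [dg dgE] := dgam Ux.
have dCx : differentiable (Ct a) (gam x) by exact: dCt (HVO Ux).
have dcomp : differentiable (Ct a \o gam) x by exact: differentiable_comp.
have E0 : 'D_h (Ct a \o gam) x = 0.
  rewrite (@near_eq_derive R _ _ (Ct a \o gam) (cst 0) x h); first exact: derive_cst.
  by apply: (filterS _ (near_U Ux)) => z Uz; rewrite /= /Ct /gam /= Hc.
have dVx := HV Ux.
have DV : 'D_h V x = 'd V x h by exact: deriveE.
have DC := diff_comp dg dCx.
rewrite deriveE // (congr1 (fun f => f h) DC) /= dgE -DV in E0.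
have LD : 'd (Ct a) (gam x) ('D_h V x, h.1) =
    'd (Ct a) (gam x) ('D_h V x, 0) + 'd (Ct a) (gam x) (0, h.1).
  rewrite -linearD; congr ('d _ _ _).
  have -> : ('D_h V x, 0) + (0, h.1) = ('D_h V x + 0, 0 + h.1) :> P by [].
  by rewrite addr0 add0r.
rewrite -[RHS]E0 LD; congr (_ + _).
rewrite (lin_decomp1 ('d (Ct a) (gam x)) ('D_h V x)).
apply: eq_bigr => J _; congr (_ * _).
by rewrite /gam -partial1.
Qed.


Lemma fermat0 (f : R -> R) (D : R) : is_derive (0 : R) (1 : R) f D ->
  (\forall t \near 0, derivable f t 1) ->
  ((\forall t \near 0, f 0 <= f t) \/ (\forall t \near 0, f t <= f 0)) ->
  D = 0.
Proof.
move=> fD dnear ext.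
have key : forall Q : R -> Prop, (\forall t \near 0, Q t) ->
    exists2 e : R, 0 < e & forall t, t \in `]-e, e[ -> derivable f t 1 /\ Q t.
  move=> Q HQ; have [e e0 He] := iffLR (nbhs_normP _ _) (filterI dnear HQ).
  exists e => // t; rewrite in_itv /= => /andP [t1 t2]; apply: He.
  by rewrite /ball_ /= sub0r normrN ltr_norml t1 t2.
case: ext => [Hmin|Hmax].
- have [e e0 He] := key _ Hmin.
  have h0 : (0 : R) \in `]-e, e[ by rewrite in_itv /= oppr_lt0 e0.
  have lee : - e <= e by rewrite -subr_ge0 opprK addr_ge0 // ltW.
  have := derive1_at_min lee (fun t ht => (He t ht).1) h0
    (fun t ht => (He t ht).2).
  by move=> /dval; rewrite (dval fD).
- have [e e0 He] := key _ Hmax.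
  have h0 : (0 : R) \in `]-e, e[ by rewrite in_itv /= oppr_lt0 e0.
  have lee : - e <= e by rewrite -subr_ge0 opprK addr_ge0 // ltW.
  have := derive1_at_max lee (fun t ht => (He t ht).1) h0
    (fun t ht => (He t ht).2).
  by move=> /dval; rewrite (dval fD).
Qed.


Lemma near_ball_line (x0 h : P) (Q : P -> Prop) : (\forall z \near x0, Q z) ->
  \forall t \near (0 : R), Q (x0 + t *: h).
Proof.
move=> HQ; have [e e0 He] := iffLR (nbhs_normP _ _) HQ.
apply: (@near_line R _ Q x0 h 0 e e0) => z.
rewrite scale0r addr0 => ze; apply: He; by rewrite /ball_ /= distrC.
Qed.

Lemma grad0 x0 : U x0 ->
  (is_local_min (Honshell L0 V) x0 \/ is_local_max (Honshell L0 V) x0) ->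
  forall h, dot (V x0) h.2 - 'd (LL (F x0)) (gam x0) (0, h.1) = 0.
Proof.
move=> Ux0 ext h.
have E : x0 + 0 *: h = x0 by rewrite scale0r addr0.
apply: (@fermat0 (fun t => Honshell L0 V (x0 + t *: h))).
- by have := @Hderiv x0 h 0; rewrite E => /(_ Ux0).
- apply: (filterS _ (near_ball_line h (near_U Ux0))) => t Ut.
  by case: (Hderiv Ut).
- case: ext => [Hm|HM]; [left|right].
  + by apply: (filterS _ (near_ball_line h Hm)) => t; rewrite /= E.
  + by apply: (filterS _ (near_ball_line h HM)) => t; rewrite /= E.
Qed.


Lemma dot_e (v : 'rV[R]_n) J : dot v (ebasis R J) = v 0 J.
Proof.
rewrite /dot (bigD1 J) //= big1 ?addr0; first by rewrite /ebasis mxE !eqxx mulr1.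
by move=> i /negbTE iJ; rewrite /ebasis mxE iJ andbF mulr0.
Qed.

Lemma dot0 (v : 'rV[R]_n) : dot v 0 = 0.
Proof. by rewrite /dot big1 // => i _; rewrite mxE mulr0. Qed.

Lemma V0 x0 : U x0 ->
  (is_local_min (Honshell L0 V) x0 \/ is_local_max (Honshell L0 V) x0) ->
  V x0 = 0.
Proof.
move=> Ux0 ext; apply/rowP => J; rewrite mxE.
have := grad0 Ux0 ext (0, ebasis R J); rewrite /= dot_e.
have -> : ((0, 0) : P) = 0 by [].
by rewrite linear0 subr0.
Qed.

Lemma dq0 x0 I : U x0 ->
  (is_local_min (Honshell L0 V) x0 \/ is_local_max (Honshell L0 V) x0) ->
  dq (Lfull L0 C (F x0)) I (V x0) x0.1 = 0.
Proof.
move=> Ux0 ext.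
have := grad0 Ux0 ext (ebasis R I, 0); rewrite /= dot0 sub0r => /eqP.
rewrite oppr_eq0 => /eqP <-.
by rewrite /gam -partial2 //; exact: (dLL (F x0) (HVO Ux0)).
Qed.


Lemma psi_bound x0 I : U x0 -> dq (Lfull L0 C (F x0)) I (V x0) x0.1 = 0 ->
  exists2 K : R, 0 < K & exists2 d : R, 0 < d & forall k : P, `|k| < d ->
    U (x0 + k) /\
    `|'d (LL (F (x0 + k))) (gam (x0 + k)) (0, ebasis R I)| <= K * `|k|.
Proof.
move=> Ux0 dq0.
set v : P := (0, ebasis R I).
pose Psi := fun y : P => 'D_v L0t (gam y) + \sum_(a < m) F y 0 a * 'D_v (Ct a) (gam y).
have PsiE : forall y, U y -> 'd (LL (F y)) (gam y) v = Psi y.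
  by move=> y Uy; rewrite dLLE //; exact: HVO.
have [dg _] := dgam Ux0.
have dPsi : differentiable Psi x0.
  apply: differentiableD.
    apply: (@differentiable_comp _ _ _ _ gam (fun w => 'D_v L0t w)) => //.
    exact: (HL.2 v).1 _ (HVO Ux0).
  rewrite (_ : (fun y => \sum_(a < m) F y 0 a * 'D_v (Ct a) (gam y)) =
    \sum_(a < m) ((fun y => F y 0 a) * ((fun w => 'D_v (Ct a) w) \o gam))); last first.
    by rewrite fct_sumE.
  apply: differentiable_sum => a; apply: differentiableM.
    apply: (@differentiable_comp _ _ _ _ F (fun M : 'rV[R]_m => M 0 a)).
      exact: HF.
    exact: differentiable_coord.
  apply: (@differentiable_comp _ _ _ _ gam (fun w => 'D_v (Ct a) w)) => //.
  exact: ((HC a).2 v).1 _ (HVO Ux0).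
have Psi0 : Psi x0 = 0.
  rewrite -PsiE // -dq0 /dq /gam -partial2 //; exact: (dLL (F x0) (HVO Ux0)).
have [d1 d10 Hd1] := diff_bound dPsi ltr01.
have [Lip Lip0 HLip] := linear_lipschitz (diff_continuous dPsi).
have [dU dU0 HdU] := open_ball HU Ux0.
exists (1 + Lip); first by rewrite ltr_wpDl.
exists (Num.min d1 dU); first by rewrite lt_min d10 dU0.
move=> k; rewrite lt_min => /andP [k1 k2].
have Uk : U (x0 + k) by apply: HdU; rewrite addrAC subrr add0r.
split; first exact: Uk.
rewrite (PsiE _ Uk).
have := Hd1 k k1; rewrite Psi0 subr0 mul1r => H1.
have H2 := HLip k.
rewrite mulrDl mul1r.
rewrite -[Psi (x0 + k)](subrK ('d Psi x0 k)).
by apply: le_trans (ler_normD _ _) _; apply: lerD.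
Qed.


Lemma g_bound x0 a I : U x0 -> V x0 = 0 ->
  forall eta : R, 0 < eta -> exists2 d : R, 0 < d & forall t s : R,
  let wv := \row_J dqdot (C a) J (V x0) x0.1 in
  let k : P := t *: (ebasis R I, 0) + s *: (0, wv) in
  `|k| < d ->
  `|dot (V (x0 + k)) wv + t * dq (C a) I (V x0) x0.1| <= eta * `|k|.
Proof.
move=> Ux0 Vx0 eta eta0.
set wv := \row_J dqdot (C a) J (V x0) x0.1.
pose g := fun y : P => dot (V y) wv.
have gE : g = \sum_(J < n) ((fun z => V z 0 J) * cst (wv 0 J)).
  by rewrite fct_sumE; apply/funext => z.
have dVx := HV Ux0.
have dg : differentiable g x0.
  rewrite gE; apply: differentiable_sum => J; apply: differentiableM => //.
  exact: Vcoord_diff.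
have dgE : forall k, 'd g x0 k = - 'd (Ct a) (gam x0) (0, k.1).
  move=> k; have DE : 'D_k g x0 = 'd g x0 k by exact: deriveE.
  have dJ : forall J, derivable ((fun z => V z 0 J) * cst (wv 0 J)) x0 k.
    move=> J; apply: diff_derivable; apply: differentiableM.
      exact: Vcoord_diff.
    exact: differentiable_cst.
  apply: etrans (esym DE) _.
  rewrite gE.
  rewrite (derive_sum dJ).
  apply/eqP; rewrite -addr_eq0; apply/eqP.
  rewrite -[RHS](constr_deriv a k Ux0); congr (_ + _).
  apply: eq_bigr => J _.
  rewrite (_ : (fun z => V z 0 J) * cst (wv 0 J) = wv 0 J \o* (fun z => V z 0 J)) //.
  rewrite deriveMr; last exact/diff_derivable/Vcoord_diff.
  by rewrite (derive_mx (@diff_derivable R _ _ V x0 k dVx)) !mxE mulrC.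
have g0 : g x0 = 0 by rewrite /g Vx0 /dot big1 // => J _; rewrite mxE mul0r.
have [d d0 Hd] := diff_bound dg eta0.
exists d => // t s /=; set k := (X in `|X| < d) => kd.
have dgu : 'd g x0 (ebasis R I, 0) = - dq (C a) I (V x0) x0.1.
  rewrite dgE /gam /= -(partial2 (ebasis R I) (dCt a (HVO Ux0))).
  by [].
have dgw : 'd g x0 (0, wv) = 0.
  rewrite dgE /=.
  have -> : ((0, 0) : P) = 0 by [].
  by rewrite linear0 oppr0.
have dgk : 'd g x0 k = - (t * dq (C a) I (V x0) x0.1).
  by rewrite /k lin2 dgu dgw mulr0 addr0 mulrN.
have := Hd k kd; rewrite g0 subr0 dgk opprK.
by [].
Qed.


Lemma mvt0 (f df : R -> R) (e : R) :
  (forall t, `|t| <= `|e| -> is_derive t (1 : R) f (df t)) ->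
  exists2 xi, `|xi| <= `|e| & f e - f 0 = df xi * e.
Proof.
move=> Hd.
have der : forall t, `|t| <= `|e| -> derivable f t 1 by move=> t /Hd [].
case: (leP 0 e) => e0.
- have [||c cin E] := @MVT_segment R f df 0 e e0.
  + move=> t; rewrite in_itv /= => /andP [t1 t2]; apply: Hd.
    by rewrite !ger0_norm // ?ltW.
  + apply: derivable_within_continuous => t; rewrite in_itv /= => /andP [t1 t2].
    by apply: der; rewrite !ger0_norm.
  + exists c; last by rewrite E subr0.
    by move: cin; rewrite in_itv /= => /andP [c1 c2]; rewrite !ger0_norm.
- have [||c cin E] := @MVT_segment R f df e 0 (ltW e0).
  + move=> t; rewrite in_itv /= => /andP [t1 t2]; apply: Hd.
    by rewrite !ltr0_norm // lerN2 ltW.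
  + apply: derivable_within_continuous => t; rewrite in_itv /= => /andP [t1 t2].
    apply: der; rewrite (ltr0_norm e0) ler_norml opprK t1 /=.
    by apply: (le_trans t2); rewrite oppr_ge0 ltW.
  + exists c.
      move: cin; rewrite in_itv /= => /andP [c1 c2].
      by rewrite (ltr0_norm e0) ler_norml opprK c1 (le_trans c2) // oppr_ge0 ltW.
    by rewrite -opprB E sub0r mulrN opprK.
Qed.


Lemma saddle x0 a I : U x0 -> V x0 = 0 ->
  dq (Lfull L0 C (F x0)) I (V x0) x0.1 = 0 ->
  dq (C a) I (V x0) x0.1 != 0 ->
  forall sg : R, (sg = 1 \/ sg = -1) -> forall del : R, 0 < del ->
  exists z : P, `|z - x0| < del /\
    0 < sg * (Honshell L0 V z - Honshell L0 V x0).
Proof.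
move=> Ux0 Vx0 dqL0 cn0 sg sgE del del0.
set c := dq (C a) I (V x0) x0.1.
set wv : 'rV[R]_n := \row_J dqdot (C a) J (V x0) x0.1.
set u : P := (ebasis R I, 0).
set w : P := (0, wv).
have [K K0 [dA dA0 HA]] := psi_bound Ux0 dqL0.
set Nu := `|u|. set Nw := `|w|.
have Nu0 : 0 <= Nu by exact: normr_ge0.
have Nw0 : 0 <= Nw by exact: normr_ge0.
set Ka := K * Nu.
have Ka0 : 0 <= Ka by rewrite mulr_ge0 // ltW.
have c2 : 0 < c * c by rewrite -expr2 exprn_even_gt0 //.
set Q := 2 * (Ka + 1) / (c * c).
have Q0 : 0 < Q by rewrite divr_gt0 // mulr_gt0 // ltr_wpDl.
have sg2 : sg * sg = 1 by case: sgE => ->; rewrite ?mulr1 ?mulrNN ?mulr1.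
have sgn : `|sg| = 1 by case: sgE => ->; rewrite ?normrN normr1.
set kk := - sg * c * Q.
set M := `|kk|.
have M0 : 0 <= M by exact: normr_ge0.
have ckk : sg * (- c * kk) = 2 * (Ka + 1).
  rewrite /kk /Q -[RHS]mul1r -sg2; field; by [].
set S := Nu + M * Nw.
have S0 : 0 <= S by rewrite addr_ge0 // mulr_ge0.
set eta := (Ka + 1) / (M * S + 1).
have eta0 : 0 < eta by rewrite divr_gt0 // ?ltr_wpDl // mulr_ge0.
have etaMS : eta * (M * S) <= Ka + 1.
  rewrite /eta mulrAC ler_pdivrMr ?ltr_wpDl ?mulr_ge0 //.
  by rewrite ler_wpM2l ?lerDl // addr_ge0.
have [dB dB0 HB] := g_bound a I Ux0 Vx0 eta0.
have [dU dU0 HdU] := open_ball HU Ux0.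
set d0 := Num.min (Num.min dA dB) (Num.min dU del).
have d00 : 0 < d0 by rewrite !lt_min dA0 dB0 dU0 del0.
set eps := d0 / (2 * (S + 1)).
have eps0 : 0 < eps by rewrite divr_gt0 // mulr_gt0 // ltr_wpDl.
have nk : forall t s : R, `|t *: u + s *: w| <= `|t| * Nu + `|s| * Nw.
  by move=> t s; apply: le_trans (ler_normD _ _) _; rewrite !normrZ.
have smallS : forall t s : R, `|t| <= eps -> `|s| <= M * eps ->
    `|t *: u + s *: w| <= eps * S.
  move=> t s ht hs; apply: le_trans (nk t s) _.
  rewrite /S mulrDr; apply: lerD; first by apply: ler_wpM2r.
  by rewrite mulrA [eps * M]mulrC; apply: ler_wpM2r.
have epsS : eps * S < d0.
  rewrite /eps mulrAC ltr_pdivrMr; last by rewrite mulr_gt0 // ltr_wpDl.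
  rewrite ltr_pM2l //; lra.
have d0A : d0 <= dA by rewrite /d0 ge_min ge_min lexx.
have d0B : d0 <= dB by rewrite /d0 ge_min ge_min lexx orbT.
have d0U : d0 <= dU by rewrite /d0 ge_min [X in _ || X]ge_min lexx orbT.
have d0d : d0 <= del by rewrite /d0 ge_min [X in _ || X]ge_min lexx !orbT.
have small : forall t s : R, `|t| <= eps -> `|s| <= M * eps ->
    `|t *: u + s *: w| < d0.
  by move=> t s ht hs; apply: le_lt_trans (smallS t s ht hs) epsS.
have smallu : forall t : R, `|t| <= eps -> `|t *: u| < d0.
  move=> t ht; have := small t 0 ht; rewrite normr0 scale0r addr0; apply.
  by rewrite mulr_ge0 // ltW.
have epsn : `|eps| = eps by rewrite gtr0_norm.
pose f1 := fun t : R => Honshell L0 V (x0 + t *: u).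
pose df1 := fun t : R => dot (V (x0 + t *: u)) u.2
   - 'd (LL (F (x0 + t *: u))) (gam (x0 + t *: u)) (0, u.1).
have Hf1 : forall t, `|t| <= `|eps| -> is_derive t (1:R) f1 (df1 t).
  move=> t; rewrite epsn => ht; apply: Hderiv.
  by apply: (HA (t *: u) _).1; apply: lt_le_trans (smallu t ht) d0A.
have [xi1 hxi1 E1] := mvt0 Hf1.
rewrite epsn in hxi1.
have hA : `|f1 eps - f1 0| <= Ka * (eps * eps).
  rewrite E1 /df1 /= dot0 sub0r normrM normrN epsn.
  have := (HA (xi1 *: u) (lt_le_trans (smallu xi1 hxi1) d0A)).2.
  rewrite normrZ => H; apply: le_trans (ler_wpM2r (ltW eps0) H) _.
  have h1 : `|xi1| * Nu <= eps * Nu by apply: ler_wpM2r.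
  have h2 : K * (`|xi1| * Nu) <= K * (eps * Nu).
    by apply: ler_wpM2l => //; exact: ltW.
  have -> : Ka * (eps * eps) = K * (eps * Nu) * eps by rewrite /Ka; ring.
  by apply: ler_wpM2r => //; exact: ltW.
set xe := x0 + eps *: u.
pose f2 := fun s : R => Honshell L0 V (xe + s *: w).
pose df2 := fun s : R => dot (V (xe + s *: w)) w.2
   - 'd (LL (F (xe + s *: w))) (gam (xe + s *: w)) (0, w.1).
have kkn : `|kk * eps| = M * eps by rewrite normrM epsn.
have Hf2 : forall s, `|s| <= `|kk * eps| -> is_derive s (1:R) f2 (df2 s).
  move=> s; rewrite kkn => hs; apply: Hderiv.
  apply: HdU; rewrite /xe -(addrA x0) (addrC x0) addrK.
  by apply: lt_le_trans (small eps s _ hs) d0U; rewrite epsn.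
have [xi2 hxi2 E2] := mvt0 Hf2.
rewrite kkn in hxi2.
have kB : `|eps *: u + xi2 *: w| < dB.
  by apply: lt_le_trans (small eps xi2 _ hxi2) d0B; rewrite epsn.
have := HB eps xi2 kB; rewrite -/u -/w => hB.
set r := dot (V (x0 + (eps *: u + xi2 *: w))) wv + eps * c.
have hr : `|r| <= eta * (eps * S).
  apply: le_trans hB _; apply: ler_wpM2l; first exact: ltW.
  by apply: smallS; rewrite ?epsn.
have df2E : df2 xi2 = r - eps * c.
  rewrite /df2 /r /= addrK.
  have -> : ((0, 0) : P) = 0 by [].
  by rewrite linear0 subr0 /xe addrA.
exists (xe + (kk * eps) *: w); split.
  rewrite /xe -(addrA x0) (addrC x0) addrK.
  by apply: lt_le_trans (small eps (kk * eps) _ _) d0d; rewrite ?epsn ?kkn.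
have f20 : f2 0 = f1 eps by rewrite /f2 scale0r addr0.
have f10 : f1 0 = Honshell L0 V x0 by rewrite /f1 scale0r addr0.
have -> : Honshell L0 V (xe + (kk * eps) *: w) - Honshell L0 V x0 =
    (f2 (kk * eps) - f2 0) + (f1 eps - f1 0) by rewrite f20 f10 /f2 addrA subrK.
rewrite E2 df2E.
set A := f1 eps - f1 0.
have -> : sg * ((r - eps * c) * (kk * eps) + A) =
   sg * (- c * kk) * (eps * eps) + sg * kk * eps * r + sg * A by ring.
rewrite ckk.
have hX : - ((Ka + 1) * (eps * eps)) <= sg * kk * eps * r.
  have nX : `|sg * kk * eps * r| = M * eps * `|r|.
    by rewrite (normrM (sg * kk * eps) r) (normrM (sg * kk) eps) (normrM sg kk) sgn mul1r (gtr0_norm eps0).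
  apply: lerNnormlW; rewrite nX.
  apply: (@le_trans _ _ (M * eps * (eta * (eps * S)))).
    by apply: ler_wpM2l => //; rewrite mulr_ge0 // ltW.
  have -> : M * eps * (eta * (eps * S)) = eta * (M * S) * (eps * eps) by ring.
  by apply: ler_wpM2r => //; rewrite mulr_ge0 // ltW.
have hY : - (Ka * (eps * eps)) <= sg * A.
  apply: lerNnormlW; rewrite normrM sgn mul1r; exact: hA.
have ee : 0 < eps * eps by rewrite mulr_gt0.
lra.
Qed.

Hypothesis H3 :
  (~ exists x, [/\ U x, (forall a, C a (V x) x.1 = 0), V x = 0 &
        forall I, dq (Lfull L0 C (F x)) I (V x) x.1 = 0])
   \/
   (forall x, U x -> (forall a, C a (V x) x.1 = 0) -> V x = 0 ->
        (forall I, dq (Lfull L0 C (F x)) I (V x) x.1 = 0) ->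
        exists a I, dq (C a) I (V x) x.1 != 0).

Lemma main_sec x0 : U x0 ->
  ~ is_local_min (Honshell L0 V) x0 /\ ~ is_local_max (Honshell L0 V) x0.
Proof.
move=> Ux0.
have key : forall sg : R, (sg = 1 \/ sg = -1) ->
    (is_local_min (Honshell L0 V) x0 \/ is_local_max (Honshell L0 V) x0) ->
    forall del : R, 0 < del ->
    exists z : P, `|z - x0| < del /\
      0 < sg * (Honshell L0 V z - Honshell L0 V x0).
  move=> sg sgE ext.
  have Vx0 := V0 Ux0 ext.
  have dqx := fun I => dq0 I Ux0 ext.
  have Cx0 := Hc Ux0.
  case: H3 => [Ha|Hb].
    by exfalso; apply: Ha; exists x0; split.
  have [a [I cn0]] := Hb x0 Ux0 Cx0 Vx0 dqx.
  exact: (saddle Ux0 Vx0 (dqx I) cn0 sgE).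
split=> ext.
- have [e e0 He] := iffLR (nbhs_normP _ _) ext.
  have [z [ze zpos]] := key (-1) (or_intror erefl) (or_introl ext) e e0.
  have := He z; rewrite /ball_ /= distrC => /(_ ze) hz.
  move: zpos; rewrite mulN1r oppr_gt0 subr_lt0 => hlt.
  by move: (lt_le_trans hlt hz); rewrite ltxx.
- have [e e0 He] := iffLR (nbhs_normP _ _) ext.
  have [z [ze zpos]] := key 1 (or_introl erefl) (or_intror ext) e e0.
  have := He z; rewrite /ball_ /= distrC => /(_ ze) hz.
  move: zpos; rewrite mul1r subr_gt0 => hlt.
  by move: (lt_le_trans hlt hz); rewrite ltxx.
Qed.
End Main.

Unset Implicit Arguments.

Theorem theorem2 (R : realType) (n m : nat)
  (L0 : 'rV[R]_n -> 'rV[R]_n -> R)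
  (C : 'I_m -> 'rV[R]_n -> 'rV[R]_n -> R)
  (Omega : set ('rV[R]_n * 'rV[R]_n))
  (U : set ('rV[R]_n * 'rV[R]_n))
  (V : 'rV[R]_n * 'rV[R]_n -> 'rV[R]_n)
  (F : 'rV[R]_n * 'rV[R]_n -> 'rV[R]_m) :
  (0 < m)%N -> (m <= n)%N ->
  open Omega ->
  C2_on Omega (fun z => L0 z.1 z.2) ->
  (forall a, C2_on Omega (fun z => C a z.1 z.2)) ->
  open U ->
  (forall x, U x -> differentiable V x) ->
  (forall x, U x -> differentiable F x) ->
  (forall x, U x -> Omega (V x, x.1)) ->
  (forall x, U x -> forall I : 'I_n,
      x.2 0 I = dqdot (Lfull L0 C (F x)) I (V x) x.1) ->
  (forall x, U x -> forall a, C a (V x) x.1 = 0) ->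
  (forall x, U x -> \det (Lhess L0 C (F x) (V x) x.1) != 0) ->
  (forall x, U x -> \det (Mmat L0 C (F x) (V x) x.1) != 0) ->
  ((~ exists x, [/\ U x, (forall a, C a (V x) x.1 = 0), V x = 0 &
        forall I, dq (Lfull L0 C (F x)) I (V x) x.1 = 0])
   \/
   (forall x, U x -> (forall a, C a (V x) x.1 = 0) -> V x = 0 ->
        (forall I, dq (Lfull L0 C (F x)) I (V x) x.1 = 0) ->
        exists a I, dq (C a) I (V x) x.1 != 0)) ->
  forall x0, U x0 ->
    ~ is_local_min (Honshell L0 V) x0 /\ ~ is_local_max (Honshell L0 V) x0.
Proof.
move=> _ _ HO HL HC HU HV HF HVO Hp Hc _ _ H3 x0 Ux0.
by apply: (main_sec HL HC HU HV HF HVO Hp Hc H3 Ux0).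
Qed.
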